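(* Any set of $5$ points in $\mathbb{R}^2$ that is in convex position is in c.s.c. position.
   Context: A set $S\subset\mathbb{R}^2$ is in convex position if every point of $S$ lies on the boundary of $\mathrm{conv}(S)$. A set of points in $\mathbb{R}^2$ is in c.s.c. position (centrally symmetric convex position) if it is contained in the boundary of a centrally symmetric convex body. *)

(* Defs.v *)
From Stdlib Require Import Reals.
Open Scope R_scope.

Definition pt := (R * R)%type.

Definition dist2 (x y : pt) : R :=
  sqrt ((fst x - fst y)^2 + (snd x - snd y)^2).

Fixpoint rsum (n : nat) (f : nat -> R) : R :=
  match n with
  | O => 0
  | S m => rsum m f + f m
  end.

Definition interior (A : pt -> Prop) (x : pt) : Prop :=
  exists eps, 0 < eps /\ forall y, dist2 x y < eps -> A y.

Definition closure (A : pt -> Prop) (x : pt) : Prop :=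
  forall eps, 0 < eps -> exists y, A y /\ dist2 x y < eps.

Definition boundary (A : pt -> Prop) (x : pt) : Prop :=
  closure A x /\ ~ interior A x.

Definition is_closed (A : pt -> Prop) : Prop :=
  forall x, closure A x -> A x.

Definition is_bounded (A : pt -> Prop) : Prop :=
  exists M, forall x, A x -> dist2 (0,0) x <= M.

Definition is_convex (A : pt -> Prop) : Prop :=
  forall x y t, A x -> A y -> 0 <= t <= 1 ->
    A (t * fst x + (1 - t) * fst y, t * snd x + (1 - t) * snd y).

Definition convex_body (K : pt -> Prop) : Prop :=
  is_convex K /\ is_closed K /\ is_bounded K /\ exists x, interior K x.

Definition centrally_symmetric (K : pt -> Prop) : Prop :=
  exists c : pt, forall x, K x -> K (2 * fst c - fst x, 2 * snd c - snd x).

Definition conv_hull (n : nat) (p : nat -> pt) (x : pt) : Prop :=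
  exists l : nat -> R,
    (forall i, (i < n)%nat -> 0 <= l i) /\
    rsum n l = 1 /\
    x = (rsum n (fun i => l i * fst (p i)), rsum n (fun i => l i * snd (p i))).

Definition in_convex_position (n : nat) (p : nat -> pt) : Prop :=
  forall i, (i < n)%nat -> boundary (conv_hull n p) (p i).

Definition csc_position (n : nat) (p : nat -> pt) : Prop :=
  exists K : pt -> Prop, convex_body K /\ centrally_symmetric K /\
    forall i, (i < n)%nat -> boundary K (p i).

(* Main.v *)
Require Import Defs.
From Stdlib Require Import Reals Lra Psatz List Arith Permutation Sorting.Sorted Classical.
Import ListNotations.
Open Scope R_scope.

Definition lin (u x : pt) : R := fst u * fst x + snd u * snd x.

Lemma sqrt_sq_abs a : sqrt (Rabs a * Rabs a) = Rabs a.
Proof. apply sqrt_square. apply Rabs_pos. Qed.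

Lemma abs_le_sqrt a b : Rabs a <= sqrt (a^2 + b^2).
Proof.
  rewrite <- sqrt_sq_abs. apply sqrt_le_1_alt.
  rewrite <- Rabs_mult. rewrite Rabs_right by nra. nra.
Qed.

Lemma sqrt_le_abs_sum a b : sqrt (a^2 + b^2) <= Rabs a + Rabs b.
Proof.
  replace (Rabs a + Rabs b) with (sqrt ((Rabs a + Rabs b) * (Rabs a + Rabs b))).
  2:{ apply sqrt_square. pose proof (Rabs_pos a); pose proof (Rabs_pos b); lra. }
  apply sqrt_le_1_alt.
  pose proof (Rabs_pos a); pose proof (Rabs_pos b).
  assert (a^2 = Rabs a * Rabs a) by (rewrite <- Rabs_mult; rewrite Rabs_right by nra; ring).
  assert (b^2 = Rabs b * Rabs b) by (rewrite <- Rabs_mult; rewrite Rabs_right by nra; ring).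
  nra.
Qed.

Lemma dist2_fst x y : Rabs (fst y - fst x) <= dist2 x y.
Proof. unfold dist2. rewrite <- Rabs_Ropp. replace (- (fst y - fst x)) with (fst x - fst y) by ring. apply abs_le_sqrt. Qed.

Lemma dist2_snd x y : Rabs (snd y - snd x) <= dist2 x y.
Proof. unfold dist2. rewrite <- Rabs_Ropp. replace (- (snd y - snd x)) with (snd x - snd y) by ring.
  rewrite Rplus_comm. apply abs_le_sqrt. Qed.

Lemma dist2_refl x : dist2 x x = 0.
Proof. unfold dist2. replace ((fst x - fst x) ^ 2 + (snd x - snd x) ^ 2) with 0 by ring. apply sqrt_0. Qed.

Definition Lc (u : pt) := Rabs (fst u) + Rabs (snd u).

Lemma lin_lip u x y : Rabs (lin u y - lin u x) <= Lc u * dist2 x y.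
Proof.
  unfold lin, Lc.
  replace (fst u * fst y + snd u * snd y - (fst u * fst x + snd u * snd x))
    with (fst u * (fst y - fst x) + snd u * (snd y - snd x)) by ring.
  eapply Rle_trans. apply Rabs_triang. rewrite !Rabs_mult.
  pose proof (dist2_fst x y); pose proof (dist2_snd x y).
  pose proof (Rabs_pos (fst u)); pose proof (Rabs_pos (snd u)).
  nra.
Qed.

Lemma Lc_pos u : 0 <= Lc u.
Proof. unfold Lc. pose proof (Rabs_pos (fst u)); pose proof (Rabs_pos (snd u)). lra. Qed.

Lemma closure_le (K : pt -> Prop) u b x :
  (forall y, K y -> lin u y <= b) -> Defs.closure K x -> lin u x <= b.
Proof.
  intros HK Hc. destruct (Rle_or_lt (lin u x) b) as [h|h]; auto.
  exfalso. pose proof (Lc_pos u).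
  destruct (Hc ((lin u x - b) / (Lc u + 1))) as [y [Ky Hy]].
  { apply Rdiv_lt_0_compat; lra. }
  pose proof (HK y Ky). pose proof (lin_lip u x y).
  assert (Lc u * dist2 x y <= Lc u * ((lin u x - b) / (Lc u + 1))) by (apply Rmult_le_compat_l; lra).
  assert (Lc u * ((lin u x - b) / (Lc u + 1)) < lin u x - b).
  { apply (Rmult_lt_reg_r (Lc u + 1)). lra. field_simplify; nra. }
  pose proof (Rle_abs (lin u x - lin u y)). rewrite Rabs_minus_sym in H4. lra.
Qed.

Definition opp (u : pt) : pt := (- fst u, - snd u).
Lemma lin_opp u x : lin (opp u) x = - lin u x.
Proof. unfold lin, opp; simpl; ring. Qed.

Lemma closure_ge (K : pt -> Prop) u a x :
  (forall y, K y -> a <= lin u y) -> Defs.closure K x -> a <= lin u x.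
Proof.
  intros HK Hc. assert (lin (opp u) x <= - a).
  { apply (closure_le K); auto. intros y Ky. rewrite lin_opp. specialize (HK y Ky). lra. }
  rewrite lin_opp in H. lra.
Qed.

Lemma not_interior_le (K : pt -> Prop) u b x :
  (forall y, K y -> lin u y <= b) -> lin u x = b -> (fst u <> 0 \/ snd u <> 0) -> ~ Defs.interior K x.
Proof.
  intros HK Hx Hu [eps [He Hi]].
  assert (Hpos : 0 < Lc u).
  { unfold Lc. destruct Hu as [h|h]; [pose proof (Rabs_pos_lt _ h); pose proof (Rabs_pos (snd u))
      | pose proof (Rabs_pos_lt _ h); pose proof (Rabs_pos (fst u))]; lra. }
  assert (Hn : 0 < fst u ^ 2 + snd u ^ 2) by (destruct Hu as [h|h]; [pose proof (Rsqr_pos_lt _ h) | pose proof (Rsqr_pos_lt _ h)]; unfold Rsqr in *; nra).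
  set (t := eps / (2 * Lc u)).
  assert (Ht : 0 < t) by (unfold t; apply Rdiv_lt_0_compat; lra).
  set (y := (fst x + t * fst u, snd x + t * snd u)).
  assert (Hd : dist2 x y < eps).
  { unfold dist2, y; simpl.
    eapply Rle_lt_trans. apply sqrt_le_abs_sum.
    replace (fst x - (fst x + t * fst u)) with (- t * fst u) by ring.
    replace (snd x - (snd x + t * snd u)) with (- t * snd u) by ring.
    rewrite !Rabs_mult. rewrite Rabs_Ropp, Rabs_right by lra.
    replace (t * Rabs (fst u) + t * Rabs (snd u)) with (t * Lc u) by (unfold Lc; ring).
    unfold t. field_simplify; lra. }
  specialize (HK y (Hi y Hd)). unfold lin, y in HK; simpl in HK. unfold lin in Hx. nra.
Qed.

Lemma not_interior_ge (K : pt -> Prop) u a x :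
  (forall y, K y -> a <= lin u y) -> lin u x = a -> (fst u <> 0 \/ snd u <> 0) -> ~ Defs.interior K x.
Proof.
  intros HK Hx Hu. apply (not_interior_le K (opp u) (- a)).
  - intros y Ky. rewrite lin_opp. specialize (HK y Ky). lra.
  - rewrite lin_opp. lra.
  - unfold opp; simpl. destruct Hu; [left|right]; lra.
Qed.

Lemma abs_bound_between a b l : a <= l <= b -> Rabs l <= Rabs a + Rabs b.
Proof. intros. unfold Rabs; repeat destruct Rcase_abs; lra. Qed.

Lemma par_csc (p : nat -> pt) (u w : pt) a1 b1 a2 b2 :
  fst u * snd w - snd u * fst w <> 0 -> a1 < b1 -> a2 < b2 ->
  (forall i, (i < 5)%nat -> (a1 <= lin u (p i) <= b1) /\ (a2 <= lin w (p i) <= b2)) ->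
  (forall i, (i < 5)%nat -> lin u (p i) = a1 \/ lin u (p i) = b1 \/ lin w (p i) = a2 \/ lin w (p i) = b2) ->
  csc_position 5 p.
Proof.
  intros Hdet H1 H2 Hin Hcov.
  set (K := fun x => (a1 <= lin u x <= b1) /\ (a2 <= lin w x <= b2)).
  set (det := fst u * snd w - snd u * fst w) in *.
  assert (Hu : fst u <> 0 \/ snd u <> 0).
  { destruct (Req_dec (fst u) 0); destruct (Req_dec (snd u) 0); auto.
    exfalso; apply Hdet; unfold det; rewrite H, H0; ring. }
  assert (Hw : fst w <> 0 \/ snd w <> 0).
  { destruct (Req_dec (fst w) 0); destruct (Req_dec (snd w) 0); auto.
    exfalso; apply Hdet; unfold det; rewrite H, H0; ring. }
  set (m1 := (a1 + b1) / 2). set (m2 := (a2 + b2) / 2).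
  set (c := ((snd w * m1 - snd u * m2) / det, (fst u * m2 - fst w * m1) / det)).
  assert (Hc1 : lin u c = m1) by (unfold lin, c, det in *; simpl; field; auto).
  assert (Hc2 : lin w c = m2) by (unfold lin, c, det in *; simpl; field; auto).
  exists K. split; [|split].
  - split; [|split; [|split]].
    + intros x y t Kx Ky Ht. unfold K in *.
      assert (E : forall v, lin v (t * fst x + (1 - t) * fst y, t * snd x + (1 - t) * snd y)
                 = t * lin v x + (1 - t) * lin v y) by (intros; unfold lin; simpl; ring).
      rewrite !E. destruct Kx as [[? ?] [? ?]]; destruct Ky as [[? ?] [? ?]].
      repeat split; nra.
    + intros x Hx. unfold K. repeat split.
      * apply (closure_ge K u a1 x); auto. intros y [[? ?] ?]; auto.
      * apply (closure_le K u b1 x); auto. intros y [[? ?] ?]; auto.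
      * apply (closure_ge K w a2 x); auto. intros y [? [? ?]]; auto.
      * apply (closure_le K w b2 x); auto. intros y [? [? ?]]; auto.
    + exists ((Rabs (snd w) * (Rabs a1 + Rabs b1) + Rabs (snd u) * (Rabs a2 + Rabs b2)) / Rabs det
            + (Rabs (fst u) * (Rabs a2 + Rabs b2) + Rabs (fst w) * (Rabs a1 + Rabs b1)) / Rabs det).
      intros x [Ku Kw].
      assert (X1 : fst x = (snd w * lin u x - snd u * lin w x) / det) by (unfold lin, det; field; auto).
      assert (X2 : snd x = (fst u * lin w x - fst w * lin u x) / det) by (unfold lin, det; field; auto).
      pose proof (abs_bound_between _ _ _ Ku). pose proof (abs_bound_between _ _ _ Kw).
      unfold dist2. simpl.
      replace ((0 - fst x) ^ 2 + (0 - snd x) ^ 2) with (fst x ^ 2 + snd x ^ 2) by ring.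
      eapply Rle_trans. apply sqrt_le_abs_sum.
      pose proof (Rabs_pos_lt det Hdet).
      apply Rplus_le_compat.
      * rewrite Rminus_0_l, Rabs_Ropp, X1. unfold Rdiv. rewrite Rabs_mult, Rabs_inv.
        apply Rmult_le_compat_r. left; apply Rinv_0_lt_compat; lra.
        eapply Rle_trans. apply Rabs_triang. rewrite Rabs_Ropp, !Rabs_mult.
        apply Rplus_le_compat; apply Rmult_le_compat_l; auto; apply Rabs_pos.
      * rewrite Rminus_0_l, Rabs_Ropp, X2. unfold Rdiv. rewrite Rabs_mult, Rabs_inv.
        apply Rmult_le_compat_r. left; apply Rinv_0_lt_compat; lra.
        eapply Rle_trans. apply Rabs_triang. rewrite Rabs_Ropp, !Rabs_mult.
        apply Rplus_le_compat; apply Rmult_le_compat_l; auto; apply Rabs_pos.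
    + exists c. pose proof (Lc_pos u). pose proof (Lc_pos w).
      set (r := Rmin ((b1 - a1) / 2) ((b2 - a2) / 2)).
      assert (Hr : 0 < r) by (unfold r; apply Rmin_glb_lt; lra).
      exists (r / (Lc u + Lc w + 1)). split. apply Rdiv_lt_0_compat; lra.
      intros y Hy.
      assert (Hr1 : r <= (b1 - a1) / 2) by apply Rmin_l.
      assert (Hr2 : r <= (b2 - a2) / 2) by apply Rmin_r.
      assert (HL : (Lc u + Lc w) * dist2 c y <= r).
      { assert (0 <= dist2 c y) by (unfold dist2; apply sqrt_pos).
        apply Rlt_le. apply (Rle_lt_trans _ ((Lc u + Lc w) * (r / (Lc u + Lc w + 1)))).
        apply Rmult_le_compat_l; lra.
        apply (Rmult_lt_reg_r (Lc u + Lc w + 1)). lra. field_simplify; nra. }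
      pose proof (lin_lip u c y). pose proof (lin_lip w c y).
      assert (0 <= dist2 c y) by (unfold dist2; apply sqrt_pos).
      unfold K. rewrite Hc1 in H3. rewrite Hc2 in H4.
      unfold m1, m2 in *.
      unfold Rabs in H3, H4. repeat destruct Rcase_abs in *; repeat split; nra.
  - exists c. intros x [Ku Kw]. unfold K.
    assert (E : forall v, lin v (2 * fst c - fst x, 2 * snd c - snd x) = 2 * lin v c - lin v x)
      by (intros; unfold lin; simpl; ring).
    rewrite !E, Hc1, Hc2. unfold m1, m2. lra.
  - intros i Hi. specialize (Hin i Hi). split.
    + intros eps He. exists (p i). split. exact Hin. rewrite dist2_refl. exact He.
    + destruct (Hcov i Hi) as [E|[E|[E|E]]].
      * apply (not_interior_ge K u a1); auto. intros y [[? ?] ?]; auto.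
      * apply (not_interior_le K u b1); auto. intros y [[? ?] ?]; auto.
      * apply (not_interior_ge K w a2); auto. intros y [? [? ?]]; auto.
      * apply (not_interior_le K w b2); auto. intros y [? [? ?]]; auto.
Qed.

Definition D (a b c : pt) : R :=
  (fst b - fst a) * (snd c - snd a) - (snd b - snd a) * (fst c - fst a).

Definition ind (i m : nat) : R := if Nat.eqb m i then 1 else 0.

Lemma rsum_plus n f g : rsum n (fun m => f m + g m) = rsum n f + rsum n g.
Proof. induction n; simpl; [ring| rewrite IHn; ring]. Qed.
Lemma rsum_scal n c f : rsum n (fun m => c * f m) = c * rsum n f.
Proof. induction n; simpl; [ring| rewrite IHn; ring]. Qed.
Lemma rsum_ext n f g : (forall m, (m < n)%nat -> f m = g m) -> rsum n f = rsum n g.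
Proof. induction n; intros H; simpl; auto. rewrite IHn, H; auto. Qed.
Lemma rsum_zero n : rsum n (fun _ => 0) = 0.
Proof. induction n; simpl; [auto|rewrite IHn; ring]. Qed.
Lemma rsum_ind n i f : (i < n)%nat -> rsum n (fun m => ind i m * f m) = f i.
Proof.
  induction n; intros Hi. lia. simpl.
  destruct (Nat.eq_dec i n).
  - subst. rewrite (rsum_ext n _ (fun _ => 0)).
    + rewrite rsum_zero. unfold ind. rewrite Nat.eqb_refl. ring.
    + intros m Hm. unfold ind. destruct (Nat.eqb m n) eqn:E; [|ring].
      apply Nat.eqb_eq in E. lia.
  - rewrite IHn by lia. unfold ind. destruct (Nat.eqb n i) eqn:E.
    apply Nat.eqb_eq in E. lia. ring.
Qed.

Lemma tri_in_hull (p : nat -> pt) i j k x :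
  (i < 5)%nat -> (j < 5)%nat -> (k < 5)%nat ->
  D (p i) (p j) (p k) > 0 ->
  D (p j) (p k) x >= 0 -> D (p k) (p i) x >= 0 -> D (p i) (p j) x >= 0 ->
  conv_hull 5 p x.
Proof.
  intros Hi Hj Hk HD H1 H2 H3.
  set (Dl := D (p i) (p j) (p k)) in *.
  set (la := D (p j) (p k) x / Dl). set (lb := D (p k) (p i) x / Dl). set (lc := D (p i) (p j) x / Dl).
  exists (fun m => la * ind i m + lb * ind j m + lc * ind k m).
  assert (Hs : la + lb + lc = 1).
  { unfold la, lb, lc, Dl, D. field. unfold Dl, D in HD. lra. }
  assert (G : forall f : nat -> R, rsum 5 (fun m => (la * ind i m + lb * ind j m + lc * ind k m) * f m)
                = la * f i + lb * f j + lc * f k).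
  { intros f. rewrite (rsum_ext 5 _ (fun m => (la * (ind i m * f m) + lb * (ind j m * f m)) + lc * (ind k m * f m)))
      by (intros; ring).
    rewrite !rsum_plus, !rsum_scal, !rsum_ind by auto. ring. }
  split; [|split].
  - intros m _. unfold ind. assert (0 <= la /\ 0 <= lb /\ 0 <= lc) as [? [? ?]].
    { unfold la, lb, lc. repeat split; apply Rmult_le_pos; try lra; left; apply Rinv_0_lt_compat; lra. }
    destruct (Nat.eqb m i), (Nat.eqb m j), (Nat.eqb m k); lra.
  - rewrite (rsum_ext 5 _ (fun m => (la * ind i m + lb * ind j m + lc * ind k m) * 1)) by (intros; ring).
    rewrite G. lra.
  - rewrite !G. destruct x as [x1 x2].
    unfold la, lb, lc, Dl, D in *. simpl in *. f_equal; field; lra.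
Qed.

Lemma D_near a b x : D a b x > 0 -> exists eps, 0 < eps /\ forall y, dist2 x y < eps -> D a b y > 0.
Proof.
  intros H. set (u := (- (snd b - snd a), fst b - fst a)).
  assert (E : forall y, D a b y = lin u y - lin u a) by (intros; unfold D, lin, u; simpl; ring).
  pose proof (Lc_pos u).
  exists (D a b x / (Lc u + 1)). split. apply Rdiv_lt_0_compat; lra.
  intros y Hy. pose proof (lin_lip u x y). rewrite !E in *.
  assert (0 <= dist2 x y) by (unfold dist2; apply sqrt_pos).
  assert (Lc u * dist2 x y < lin u x - lin u a).
  { apply (Rle_lt_trans _ (Lc u * ((lin u x - lin u a) / (Lc u + 1)))).
    apply Rmult_le_compat_l; lra.
    apply (Rmult_lt_reg_r (Lc u + 1)). lra. field_simplify; nra. }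
  unfold Rabs in H1. destruct Rcase_abs in H1; lra.
Qed.

Lemma D_cyc a b c : D a b c = D b c a. Proof. unfold D; ring. Qed.
Lemma D_sum a b c x : D a b c = D b c x + D c a x + D a b x. Proof. unfold D; ring. Qed.

Lemma inside_interior (p : nat -> pt) i j k x :
  (i < 5)%nat -> (j < 5)%nat -> (k < 5)%nat ->
  D (p i) (p j) x > 0 -> D (p j) (p k) x > 0 -> D (p k) (p i) x > 0 ->
  Defs.interior (conv_hull 5 p) x.
Proof.
  intros Hi Hj Hk H1 H2 H3.
  destruct (D_near _ _ _ H1) as [e1 [E1 F1]].
  destruct (D_near _ _ _ H2) as [e2 [E2 F2]].
  destruct (D_near _ _ _ H3) as [e3 [E3 F3]].
  exists (Rmin e1 (Rmin e2 e3)). split.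
  repeat apply Rmin_glb_lt; auto.
  intros y Hy.
  assert (dist2 x y < e1) by (eapply Rlt_le_trans; [apply Hy| apply Rmin_l]).
  assert (dist2 x y < e2) by (eapply Rlt_le_trans; [apply Hy| eapply Rle_trans; [apply Rmin_r|apply Rmin_l]]).
  assert (dist2 x y < e3) by (eapply Rlt_le_trans; [apply Hy| eapply Rle_trans; [apply Rmin_r|apply Rmin_r]]).
  specialize (F1 y H). specialize (F2 y H0). specialize (F3 y H4).
  apply (tri_in_hull p i j k y); auto; try lra.
  rewrite (D_sum _ _ _ x). lra.
Qed.

Lemma seg_interior (p : nat -> pt) i j k l x t :
  (i < 5)%nat -> (j < 5)%nat -> (k < 5)%nat -> (l < 5)%nat ->
  0 < t < 1 ->
  x = (fst (p i) + t * (fst (p j) - fst (p i)), snd (p i) + t * (snd (p j) - snd (p i))) ->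
  D (p i) (p j) (p k) > 0 -> D (p i) (p j) (p l) < 0 ->
  Defs.interior (conv_hull 5 p) x.
Proof.
  intros Hi Hj Hk Hl Ht Hx Hc Hd.
  assert (H1 : D (p j) (p k) x > 0).
  { replace (D (p j) (p k) x) with ((1 - t) * D (p i) (p j) (p k)) by (rewrite Hx; unfold D; simpl; ring).
    apply Rmult_lt_0_compat; lra. }
  assert (H2 : D (p k) (p i) x > 0).
  { replace (D (p k) (p i) x) with (t * D (p i) (p j) (p k)) by (rewrite Hx; unfold D; simpl; ring).
    apply Rmult_lt_0_compat; lra. }
  assert (H3 : D (p i) (p l) x > 0).
  { replace (D (p i) (p l) x) with (t * (- D (p i) (p j) (p l))) by (rewrite Hx; unfold D; simpl; ring).
    apply Rmult_lt_0_compat; lra. }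
  assert (H4 : D (p l) (p j) x > 0).
  { replace (D (p l) (p j) x) with ((1 - t) * (- D (p i) (p j) (p l))) by (rewrite Hx; unfold D; simpl; ring).
    apply Rmult_lt_0_compat; lra. }
  destruct (D_near _ _ _ H1) as [e1 [E1 F1]].
  destruct (D_near _ _ _ H2) as [e2 [E2 F2]].
  destruct (D_near _ _ _ H3) as [e3 [E3 F3]].
  destruct (D_near _ _ _ H4) as [e4 [E4 F4]].
  exists (Rmin (Rmin e1 e2) (Rmin e3 e4)). split.
  repeat apply Rmin_glb_lt; auto.
  intros y Hy.
  assert (Hm : forall a b c d, dist2 x y < Rmin (Rmin a b) (Rmin c d) ->
     dist2 x y < a /\ dist2 x y < b /\ dist2 x y < c /\ dist2 x y < d).
  { intros. pose proof (Rmin_l (Rmin a b) (Rmin c d)). pose proof (Rmin_r (Rmin a b) (Rmin c d)).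
    pose proof (Rmin_l a b). pose proof (Rmin_r a b). pose proof (Rmin_l c d). pose proof (Rmin_r c d).
    lra. }
  destruct (Hm _ _ _ _ Hy) as [G1 [G2 [G3 G4]]].
  specialize (F1 y G1). specialize (F2 y G2). specialize (F3 y G3). specialize (F4 y G4).
  destruct (Rle_or_lt 0 (D (p i) (p j) y)).
  - apply (tri_in_hull p i j k y); auto; lra.
  - apply (tri_in_hull p j i l y); auto; try lra.
    + unfold D in *; lra.
    + unfold D in *; lra.
Qed.

Definition ext (l : list pt) (u x : pt) : Prop :=
  (forall y, In y l -> lin u y <= lin u x) \/ (forall y, In y l -> lin u x <= lin u y).

Definition nz (u : pt) : Prop := fst u <> 0 \/ snd u <> 0.

Definition Covered (l : list pt) : Prop :=
  exists u w, nz u /\ nz w /\ forall x, In x l -> ext l u x \/ ext l w x.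

Definition l5 (p : nat -> pt) : list pt := [p 0%nat; p 1%nat; p 2%nat; p 3%nat; p 4%nat].

Lemma In_l5 p x : In x (l5 p) <-> exists i, (i < 5)%nat /\ x = p i.
Proof.
  split.
  - intros H. simpl in H. destruct H as [H|[H|[H|[H|[H|H]]]]];
     [exists 0%nat|exists 1%nat|exists 2%nat|exists 3%nat|exists 4%nat|destruct H]; split; auto; lia.
  - intros [i [Hi ->]]. simpl.
    destruct i as [|[|[|[|[|i]]]]]; auto 6; lia.
Qed.

Definition max5 (f : nat -> R) := Rmax (f 0%nat) (Rmax (f 1%nat) (Rmax (f 2%nat) (Rmax (f 3%nat) (f 4%nat)))).
Definition min5 (f : nat -> R) := Rmin (f 0%nat) (Rmin (f 1%nat) (Rmin (f 2%nat) (Rmin (f 3%nat) (f 4%nat)))).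

Lemma max5_ge f i : (i < 5)%nat -> f i <= max5 f.
Proof.
  intros Hi. unfold max5.
  unfold Rmax; destruct i as [|[|[|[|[|i]]]]]; try lia; repeat destruct Rle_dec; lra.
Qed.
Lemma max5_le f c : (forall i, (i < 5)%nat -> f i <= c) -> max5 f <= c.
Proof. intros H. unfold max5. repeat apply Rmax_lub; apply H; lia. Qed.
Lemma min5_le f i : (i < 5)%nat -> min5 f <= f i.
Proof.
  intros Hi. unfold min5.
  unfold Rmin; destruct i as [|[|[|[|[|i]]]]]; try lia; repeat destruct Rle_dec; lra.
Qed.
Lemma min5_ge f c : (forall i, (i < 5)%nat -> c <= f i) -> c <= min5 f.
Proof. intros H. unfold min5. repeat apply Rmin_glb; apply H; lia. Qed.

Lemma ext_val p u i : (i < 5)%nat -> ext (l5 p) u (p i) ->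
  lin u (p i) = max5 (fun k => lin u (p k)) \/ lin u (p i) = min5 (fun k => lin u (p k)).
Proof.
  intros Hi [H|H].
  - left. apply Rle_antisym. apply (max5_ge (fun k => lin u (p k))); auto.
    apply max5_le. intros k Hk. apply H. apply In_l5. eauto.
  - right. apply Rle_antisym.
    apply min5_ge. intros k Hk. apply H. apply In_l5. eauto.
    apply (min5_le (fun k => lin u (p k))); auto.
Qed.

Lemma cov_csc_det p u w :
  fst u * snd w - snd u * fst w <> 0 ->
  (forall i, (i < 5)%nat -> ext (l5 p) u (p i) \/ ext (l5 p) w (p i)) ->
  csc_position 5 p.
Proof.
  intros Hdet Hc.
  set (mu := min5 (fun k => lin u (p k))). set (Mu := max5 (fun k => lin u (p k))).
  set (mw := min5 (fun k => lin w (p k))). set (Mw := max5 (fun k => lin w (p k))).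
  assert (Hu : forall i, (i < 5)%nat -> mu <= lin u (p i) <= Mu).
  { intros; split; [apply (min5_le (fun k => lin u (p k)))|apply (max5_ge (fun k => lin u (p k)))]; auto. }
  assert (Hw : forall i, (i < 5)%nat -> mw <= lin w (p i) <= Mw).
  { intros; split; [apply (min5_le (fun k => lin w (p k)))|apply (max5_ge (fun k => lin w (p k)))]; auto. }
  assert (Hmu : mu <= Mu) by (pose proof (Hu 0%nat ltac:(lia)); lra).
  assert (Hmw : mw <= Mw) by (pose proof (Hw 0%nat ltac:(lia)); lra).
  set (Mu' := if Req_EM_T mu Mu then mu + 1 else Mu).
  set (Mw' := if Req_EM_T mw Mw then mw + 1 else Mw).
  apply (par_csc p u w mu Mu' mw Mw'); auto.
  - unfold Mu'; destruct (Req_EM_T mu Mu) as [E|E]; [lra|]; destruct Hmu; [lra|contradiction].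
  - unfold Mw'; destruct (Req_EM_T mw Mw) as [E|E]; [lra|]; destruct Hmw; [lra|contradiction].
  - intros i Hi. specialize (Hu i Hi). specialize (Hw i Hi). unfold Mu', Mw'.
    destruct (Req_EM_T mu Mu); destruct (Req_EM_T mw Mw); lra.
  - intros i Hi. specialize (Hu i Hi). specialize (Hw i Hi).
    destruct (Hc i Hi) as [E|E]; apply ext_val in E; auto; unfold Mu', Mw'; fold mu Mu mw Mw in E;
    destruct (Req_EM_T mu Mu); destruct (Req_EM_T mw Mw); lra.
Qed.

Lemma ext_par l u w x : nz u -> nz w -> fst u * snd w - snd u * fst w = 0 -> ext l w x -> ext l u x.
Proof.
  intros Hu Hw Hd He.
  assert (exists k, k <> 0 /\ forall y, lin w y = k * lin u y) as [k [Hk E]].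
  { destruct Hu as [h|h].
    - exists (fst w / fst u). split.
      + intro Z. destruct Hw as [h'|h'].
        * apply h'. apply (Rmult_eq_reg_r (/ fst u)). rewrite Rmult_0_l. unfold Rdiv in Z; rewrite Z. ring.
          apply Rinv_neq_0_compat; auto.
        * apply h'. assert (fst w = 0).
          { apply (Rmult_eq_reg_r (/ fst u)). rewrite Rmult_0_l. unfold Rdiv in Z; rewrite Z. ring. apply Rinv_neq_0_compat; auto. }
          rewrite H in Hd. apply (Rmult_eq_reg_l (fst u)); auto. lra.
      + intros y. unfold lin, Rdiv. apply (Rmult_eq_reg_l (fst u)); auto.
        replace (fst u * (fst w * / fst u * (fst u * fst y + snd u * snd y))) with (fst w * (fst u * fst y + snd u * snd y)) by (field; auto).
        assert (E0 : fst u * snd w = snd u * fst w) by lra.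
        replace (fst u * (fst w * fst y + snd w * snd y)) with (fst u * fst w * fst y + (fst u * snd w) * snd y) by ring.
        rewrite E0. ring.
    - exists (snd w / snd u). split.
      + intro Z. assert (snd w = 0).
        { apply (Rmult_eq_reg_r (/ snd u)). rewrite Rmult_0_l. unfold Rdiv in Z; rewrite Z. ring. apply Rinv_neq_0_compat; auto. }
        destruct Hw as [h'|h']; auto. apply h'. rewrite H in Hd. apply (Rmult_eq_reg_l (snd u)); auto. lra.
      + intros y. unfold lin, Rdiv. apply (Rmult_eq_reg_l (snd u)); auto.
        replace (snd u * (snd w * / snd u * (fst u * fst y + snd u * snd y))) with (snd w * (fst u * fst y + snd u * snd y)) by (field; auto).
        assert (E0 : fst u * snd w = snd u * fst w) by lra.
        replace (snd u * (fst w * fst y + snd w * snd y)) with ((snd u * fst w) * fst y + snd u * snd w * snd y) by ring.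
        rewrite <- E0. ring. }
  destruct (Rlt_or_le 0 k) as [Kp|Kn].
  - destruct He as [H|H]; [left|right]; intros y Hy; specialize (H y Hy); rewrite !E in H;
      apply (Rmult_le_reg_l k); auto.
  - assert (Kneg : k < 0) by lra.
    destruct He as [H|H]; [right|left]; intros y Hy; specialize (H y Hy); rewrite !E in H; nra.
Qed.

Lemma cov_csc p : Covered (l5 p) -> csc_position 5 p.
Proof.
  intros [u [w [Hu [Hw Hc]]]].
  destruct (Req_dec (fst u * snd w - snd u * fst w) 0) as [Z|Z].
  - apply (cov_csc_det p u (- snd u, fst u)).
    + simpl. destruct Hu as [h|h]; [pose proof (Rsqr_pos_lt _ h)|pose proof (Rsqr_pos_lt _ h)];
      unfold Rsqr in *; nra.
    + intros i Hi. left. assert (In (p i) (l5 p)) by (apply In_l5; eauto).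
      destruct (Hc _ H); auto. apply (ext_par _ u w); auto.
  - apply (cov_csc_det p u w); auto. intros i Hi. apply Hc. apply In_l5; eauto.
Qed.

Definition ue (a b : pt) : pt := (- (snd b - snd a), fst b - fst a).
Lemma lin_ue a b y : lin (ue a b) y = D a b y + lin (ue a b) a.
Proof. unfold lin, ue, D; simpl; ring. Qed.

Lemma nz_ue a b : a <> b -> nz (ue a b).
Proof.
  intros H. unfold nz, ue; simpl.
  destruct (Req_dec (fst b) (fst a)); destruct (Req_dec (snd b) (snd a)).
  - exfalso. apply H. destruct a, b; simpl in *; subst; auto.
  - left; lra.
  - right; lra.
  - right; lra.
Qed.

Lemma D_aa a y : D a a y = 0. Proof. unfold D; ring. Qed.
Lemma D_a a b : D a b a = 0. Proof. unfold D; ring. Qed.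
Lemma D_b a b : D a b b = 0. Proof. unfold D; ring. Qed.

Definition supp (l : list pt) (a b : pt) := forall y, In y l -> D a b y >= 0.

Lemma ext_endA l a b : supp l a b -> ext l (ue a b) a.
Proof. intros H. right. intros y Hy. rewrite (lin_ue a b y), (lin_ue a b a). specialize (H y Hy).
  rewrite D_a in *. lra. Qed.
Lemma ext_endB l a b : supp l a b -> ext l (ue a b) b.
Proof. intros H. right. intros y Hy. rewrite (lin_ue a b y), (lin_ue a b b). specialize (H y Hy).
  rewrite D_b in *. lra. Qed.
Lemma ext_maxp l a b x : (forall y, In y l -> D a b y <= D a b x) -> ext l (ue a b) x.
Proof. intros H. left. intros y Hy. rewrite (lin_ue a b y), (lin_ue a b x). specialize (H y Hy). lra. Qed.


Lemma argmax3 r2 r3 r4 : (r3 <= r2 /\ r4 <= r2) \/ (r2 <= r3 /\ r4 <= r3) \/ (r2 <= r4 /\ r3 <= r4).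
Proof. destruct (Rle_dec r3 r2); destruct (Rle_dec r4 r2); destruct (Rle_dec r4 r3); lra. Qed.

Section Cyc.
Variables (l : list pt) (q0 q1 q2 q3 q4 : pt).
Hypothesis Hl : forall y, In y l -> y = q0 \/ y = q1 \/ y = q2 \/ y = q3 \/ y = q4.
Hypothesis S0 : supp l q0 q1.
Hypothesis S1 : supp l q1 q2.
Hypothesis S2 : supp l q2 q3.
Hypothesis S3 : supp l q3 q4.
Hypothesis S4 : supp l q4 q0.
Hypothesis N0 : q0 <> q1.
Hypothesis N1 : q1 <> q2.
Hypothesis N2 : q2 <> q3.
Hypothesis N3 : q3 <> q4.
Hypothesis N4 : q4 <> q0.
Hypotheses (I0 : In q0 l) (I1 : In q1 l) (I2 : In q2 l) (I3 : In q3 l) (I4 : In q4 l).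

Lemma maxlem a b x : (forall y, y = q0 \/ y = q1 \/ y = q2 \/ y = q3 \/ y = q4 -> D a b y <= D a b x) ->
  ext l (ue a b) x.
Proof. intros H. apply ext_maxp. intros y Hy. apply H. auto. Qed.

Lemma cover_cyc : Covered l.
Proof.
  assert (G : forall u w, nz u -> nz w ->
     (forall x, x = q0 \/ x = q1 \/ x = q2 \/ x = q3 \/ x = q4 -> ext l u x \/ ext l w x) -> Covered l).
  { intros u w Hu Hw H. exists u, w. split; [auto|split; [auto|]]. intros x Hx. apply H. auto. }
  pose proof (S0 _ I2); pose proof (S0 _ I3); pose proof (S0 _ I4).
  pose proof (S4 _ I1); pose proof (S4 _ I2); pose proof (S4 _ I3).
  destruct (argmax3 (D q0 q1 q2) (D q0 q1 q3) (D q0 q1 q4)) as [A|[A|A]].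
  - apply (G (ue q0 q1) (ue q3 q4)); try apply nz_ue; auto.
    intros x [->|[->|[->|[->| ->]]]].
    + left; apply ext_endA; auto.
    + left; apply ext_endB; auto.
    + left; apply maxlem. intros y [->|[->|[->|[->| ->]]]]; rewrite ?D_a, ?D_b; lra.
    + right; apply ext_endA; auto.
    + right; apply ext_endB; auto.
  -
    destruct (argmax3 (D q4 q0 q1) (D q4 q0 q2) (D q4 q0 q3)) as [B|[B|B]].
    + apply (G (ue q4 q0) (ue q2 q3)); try apply nz_ue; auto.
      intros x [->|[->|[->|[->| ->]]]].
      * left; apply ext_endB; auto.
      * left; apply maxlem. intros y [->|[->|[->|[->| ->]]]]; rewrite ?D_a, ?D_b; lra.
      * right; apply ext_endA; auto.
      * right; apply ext_endB; auto.
      * left; apply ext_endA; auto.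
    + apply (G (ue q4 q0) (ue q0 q1)); try apply nz_ue; auto.
      intros x [->|[->|[->|[->| ->]]]].
      * left; apply ext_endB; auto.
      * right; apply ext_endB; auto.
      * left; apply maxlem. intros y [->|[->|[->|[->| ->]]]]; rewrite ?D_a, ?D_b; lra.
      * right; apply maxlem. intros y [->|[->|[->|[->| ->]]]]; rewrite ?D_a, ?D_b; lra.
      * left; apply ext_endA; auto.
    + apply (G (ue q4 q0) (ue q1 q2)); try apply nz_ue; auto.
      intros x [->|[->|[->|[->| ->]]]].
      * left; apply ext_endB; auto.
      * right; apply ext_endA; auto.
      * right; apply ext_endB; auto.
      * left; apply maxlem. intros y [->|[->|[->|[->| ->]]]]; rewrite ?D_a, ?D_b; lra.
      * left; apply ext_endA; auto.
  - apply (G (ue q0 q1) (ue q2 q3)); try apply nz_ue; auto.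
    intros x [->|[->|[->|[->| ->]]]].
    + left; apply ext_endA; auto.
    + left; apply ext_endB; auto.
    + right; apply ext_endA; auto.
    + right; apply ext_endB; auto.
    + left; apply maxlem. intros y [->|[->|[->|[->| ->]]]]; rewrite ?D_a, ?D_b; lra.
Qed.
End Cyc.

Section Sort.
Variable X : Type.
Variable R : X -> X -> Prop.

Lemma insert_ex (L : list X) (a : X) :
  In a L ->
  (forall x y, In x L -> In y L -> R x y \/ R y x) ->
  (forall x y z, In x L -> In y L -> In z L -> R x y -> R y z -> R x z) ->
  forall s, (forall y, In y s -> In y L) -> StronglySorted R s ->
  exists s', Permutation (a :: s) s' /\ StronglySorted R s'.
Proof.
  intros Ha Tot Tr s. induction s as [|b s IH]; intros Hs SS.
  - exists [a]. split; auto. constructor; auto.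
  - inversion SS as [|? ? SS' F]; subst.
    assert (Hb : In b L) by (apply Hs; left; auto).
    destruct (Tot a b Ha Hb) as [Hab|Hba].
    + exists (a :: b :: s). split; auto. constructor; auto.
      constructor; auto. rewrite Forall_forall in *. intros y Hy.
      apply (Tr a b y); auto. apply Hs; right; auto.
    + destruct IH as [s' [P S']]; auto. intros y Hy; apply Hs; right; auto.
      exists (b :: s'). split.
      * eapply perm_trans. apply perm_swap. apply perm_skip. auto.
      * constructor; auto. rewrite Forall_forall in *. intros y Hy.
        apply (Permutation_in _ (Permutation_sym P)) in Hy. destruct Hy as [->|Hy]; auto.
Qed.

Lemma sort_ex (L : list X) :
  (forall x y, In x L -> In y L -> R x y \/ R y x) ->
  (forall x y z, In x L -> In y L -> In z L -> R x y -> R y z -> R x z) ->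
  exists l', Permutation L l' /\ StronglySorted R l'.
Proof.
  intros Tot Tr.
  assert (forall k, (forall y, In y k -> In y L) -> exists l', Permutation k l' /\ StronglySorted R l').
  { intros k. induction k as [|a k IH]; intros Hk.
    - exists []. split; auto. constructor.
    - destruct IH as [k' [P S]]. intros y Hy; apply Hk; right; auto.
      destruct (insert_ex L a (Hk a (or_introl eq_refl)) Tot Tr k') as [s' [P' S']]; auto.
      + intros y Hy. apply Hk. right. apply (Permutation_in _ (Permutation_sym P)); auto.
      + exists s'. split; auto. eapply perm_trans. apply perm_skip. exact P. auto. }
  apply H. auto.
Qed.

Lemma SS4 a b c d : StronglySorted R [a; b; c; d] ->
  R a b /\ R a c /\ R a d /\ R b c /\ R b d /\ R c d.
Proof.
  intros H. inversion H as [|? ? H1 F1]; subst. inversion H1 as [|? ? H2 F2]; subst.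
  inversion H2 as [|? ? H3 F3]; subst.
  rewrite Forall_forall in F1, F2, F3.
  repeat split; [apply F1|apply F1|apply F1|apply F2|apply F2|apply F3]; simpl; auto.
Qed.
End Sort.

Definition Hh (A b : pt) := fst A < fst b \/ (fst A = fst b /\ snd A < snd b).
Definition nrm (A b : pt) := (fst b - fst A)^2 + (snd b - snd A)^2.
Definition Col (A b c : pt) (t : R) := fst c = fst A + t * (fst b - fst A) /\ snd c = snd A + t * (snd b - snd A).

Lemma G1r b1 b2 c1 c2 : (0 < b1 \/ (0 = b1 /\ 0 < b2)) -> (0 < c1 \/ (0 = c1 /\ 0 < c2)) ->
  b1 * c2 - b2 * c1 = 0 -> exists t, 0 < t /\ c1 = t * b1 /\ c2 = t * b2.
Proof.
  intros Hb Hc E. destruct Hb as [Hb|[Hb Hb2]].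
  - exists (c1 / b1). assert (0 < c1).
    { destruct Hc as [Hc|[Hc Hc2]]; auto. subst c1. exfalso. nra. }
    split. apply Rdiv_lt_0_compat; auto. split. field; lra.
    apply (Rmult_eq_reg_l b1). 2: lra. replace (b1 * (c1 / b1 * b2)) with (c1 * b2) by (field; lra). lra.
  - subst b1. assert (c1 = 0) by nra. subst c1.
    destruct Hc as [Hc|[_ Hc]]; [lra|].
    exists (c2 / b2). split. apply Rdiv_lt_0_compat; auto. split. ring. field; lra.
Qed.

Lemma G1 A b c : Hh A b -> Hh A c -> D A b c = 0 -> exists t, 0 < t /\ Col A b c t.
Proof.
  intros Hb Hc E. unfold Hh, Col, D in *.
  destruct (G1r (fst b - fst A) (snd b - snd A) (fst c - fst A) (snd c - snd A)) as [t [Ht [E1 E2]]].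
  - destruct Hb as [h|[h h']]; [left|right]; lra.
  - destruct Hc as [h|[h h']]; [left|right]; lra.
  - lra.
  - exists t. split; auto. split; lra.
Qed.

Lemma Col_DAc A b c t y : Col A b c t -> D A c y = t * D A b y.
Proof. intros [E1 E2]. unfold D. rewrite E1, E2. ring. Qed.
Lemma Col_Dyc A b c t y : Col A b c t -> D A y c = t * D A y b.
Proof. intros [E1 E2]. unfold D. rewrite E1, E2. ring. Qed.
Lemma Col_nrm A b c t : Col A b c t -> nrm A c = t^2 * nrm A b.
Proof. intros [E1 E2]. unfold nrm. rewrite E1, E2. ring. Qed.
Lemma Col_D0 A b c t : Col A b c t -> D A b c = 0.
Proof. intros [E1 E2]. unfold D. rewrite E1, E2. ring. Qed.

Lemma nrm_pos A b : Hh A b -> 0 < nrm A b.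
Proof. unfold Hh, nrm. intros [h|[h h']]; [assert (H : 0 < fst b - fst A) by lra; pose proof (pow2_ge_0 (snd b - snd A)); pose proof (pow_lt _ 2 H) | assert (H : 0 < snd b - snd A) by lra; pose proof (pow2_ge_0 (fst b - fst A)); pose proof (pow_lt _ 2 H)]; lra. Qed.

Definition lastp (l : list pt) (A b : pt) := forall y, In y l -> D A b y <= 0.

Lemma last_col l A b c t : 0 < t -> Col A b c t -> (lastp l A b <-> lastp l A c).
Proof.
  intros Ht HC. unfold lastp. split; intros H y Hy; specialize (H y Hy);
  pose proof (Col_DAc A b c t y HC) as E.
  - rewrite E. assert (0 <= t * (- D A b y)) by (apply Rmult_le_pos; lra). lra.
  - rewrite E in H. destruct (Rle_or_lt (D A b y) 0); auto.
    assert (0 < t * D A b y) by (apply Rmult_lt_0_compat; lra). lra.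

Qed.

Definition Rang (l : list pt) (A b c : pt) : Prop :=
  D A b c > 0 \/ (D A b c = 0 /\ (lastp l A b -> nrm A c <= nrm A b) /\ (~ lastp l A b -> nrm A b <= nrm A c)).

Lemma G2r b1 b2 c1 c2 d1 d2 : (0 < b1 \/ (0 = b1 /\ 0 < b2)) -> (0 < c1 \/ (0 = c1 /\ 0 < c2)) ->
  (0 < d1 \/ (0 = d1 /\ 0 < d2)) -> b1 * c2 - b2 * c1 > 0 -> c1 * d2 - c2 * d1 > 0 -> b1 * d2 - b2 * d1 > 0.
Proof.
  intros Hb Hc Hd E1 E2.
  assert (I : c1 * (b1 * d2 - b2 * d1) = b1 * (c1 * d2 - c2 * d1) + d1 * (b1 * c2 - b2 * c1)) by ring.
  destruct Hc as [Hc|[Hc Hc2]].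
  - destruct Hb as [Hb|[Hb Hb2]]; destruct Hd as [Hd|[Hd Hd2]].
    + apply (Rmult_lt_reg_l c1); auto. rewrite Rmult_0_r, I. nra.
    + apply (Rmult_lt_reg_l c1); auto. rewrite Rmult_0_r, I. nra.
    + apply (Rmult_lt_reg_l c1); auto. rewrite Rmult_0_r, I. nra.
    + subst. nra.
  - subst c1. destruct Hb as [Hb|[Hb Hb2]]; destruct Hd as [Hd|[Hd Hd2]]; subst; nra.
Qed.

Lemma G2 A b c d : Hh A b -> Hh A c -> Hh A d -> D A b c > 0 -> D A c d > 0 -> D A b d > 0.
Proof.
  unfold Hh, D. intros Hb Hc Hd E1 E2.
  apply (G2r (fst b - fst A) (snd b - snd A) (fst c - fst A) (snd c - snd A) (fst d - fst A) (snd d - snd A));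
  auto; [destruct Hb as [h|[h h']]|destruct Hc as [h|[h h']]|destruct Hd as [h|[h h']]]; ((left; lra) || (right; lra)).
Qed.

Lemma pos_fact t x : 0 < t -> t * x > 0 -> x > 0.
Proof. intros Ht H. destruct (Rle_or_lt x 0); auto. assert (0 <= t * (- x)) by (apply Rmult_le_pos; lra). lra. Qed.

Lemma Rang_ge l A b c : Rang l A b c -> D A b c >= 0.
Proof. intros [H|[H _]]; lra. Qed.

Lemma Rang_total l A b c : Hh A b -> Hh A c -> Rang l A b c \/ Rang l A c b.
Proof.
  intros Hb Hc. unfold Rang.
  destruct (Rtotal_order (D A b c) 0) as [N|[Z|P]]; auto.
  - right. left. unfold D in *. lra.
  - destruct (G1 A b c Hb Hc Z) as [t [Ht HC]].
    assert (Z' : D A c b = 0) by (unfold D in *; lra).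
    pose proof (last_col l A b c t Ht HC) as LE.
    destruct (classic (lastp l A b)) as [L|L]; destruct (Rle_dec (nrm A c) (nrm A b)).
    + left. right. split; auto. split; auto. intros; contradiction.
    + right. right. split; auto. split. intros; lra. intros L'; exfalso; apply L'; apply LE; auto.
    + right. right. split; auto. split. intros L'; exfalso; apply L; apply LE; auto. intros; auto.
    + left. right. split; auto. split. intros; contradiction. intros; lra.
Qed.

Lemma Rang_trans l A b c d : Hh A b -> Hh A c -> Hh A d -> Rang l A b c -> Rang l A c d -> Rang l A b d.
Proof.
  intros Hb Hc Hd R1 R2.
  destruct R1 as [P1|[Z1 [L1 N1]]]; destruct R2 as [P2|[Z2 [L2 N2]]].
  - left. apply (G2 A b c d); auto.
  - left. destruct (G1 A c d Hc Hd Z2) as [t [Ht HC]]. rewrite (Col_Dyc A c d t b HC). apply Rmult_lt_0_compat; lra.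
  - left. destruct (G1 A b c Hb Hc Z1) as [t [Ht HC]]. rewrite (Col_DAc A b c t d HC) in P2. apply (pos_fact t); auto.
  - destruct (G1 A b c Hb Hc Z1) as [t [Ht HC]]. destruct (G1 A c d Hc Hd Z2) as [s [Hs HC']].
    pose proof (last_col l A b c t Ht HC). pose proof (last_col l A c d s Hs HC').
    right. split.
    + rewrite (Col_Dyc A c d s b HC'). rewrite Z1. ring.
    + split.
      * intros L. assert (lastp l A c) by tauto. specialize (L1 L). specialize (L2 H1). lra.
      * intros L. assert (~ lastp l A c) by tauto. specialize (N1 L). specialize (N2 H1). lra.
Qed.

Definition Tprop (l : list pt) := forall a b c x, In a l -> In b l -> In c l -> In x l ->
  ~ (D a b x > 0 /\ D b c x > 0 /\ D c a x > 0).
Definition Sprop (l : list pt) := forall a b c d x t, In a l -> In b l -> In c l -> In d l -> In x l ->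
  0 < t < 1 -> x = (fst a + t * (fst b - fst a), snd a + t * (snd b - snd a)) ->
  D a b c > 0 -> D a b d < 0 -> False.

Lemma D4 A a b y : D a b y = D A a b + D A b y + D A y a.
Proof. unfold D; ring. Qed.
Lemma Dswap A a y : D A a y = - D A y a.
Proof. unfold D; ring. Qed.

Lemma t_le1 t n : 0 < t -> 0 < n -> t ^ 2 * n <= n -> t <= 1.
Proof. intros Ht Hn H. destruct (Rle_or_lt t 1); auto.
  assert (1 < t ^ 2) by (simpl; nra). nra. Qed.
Lemma t_ge1 t n : 0 < t -> 0 < n -> n <= t ^ 2 * n -> 1 <= t.
Proof. intros Ht Hn H. destruct (Rle_or_lt 1 t); auto.
  assert (t ^ 2 < 1) by (simpl; nra). nra. Qed.

Lemma Col_1 A b c : Col A b c 1 -> c = b.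
Proof. intros [E1 E2]. destruct b, c; simpl in *. f_equal; lra. Qed.

Lemma Col_inv A b c t : 0 < t -> Col A b c t ->
  b = (fst A + / t * (fst c - fst A), snd A + / t * (snd c - snd A)).
Proof. intros Ht [E1 E2]. destruct b as [b1 b2]; simpl in *. rewrite E1, E2. f_equal; field; lra. Qed.

Lemma notlast l A b : ~ lastp l A b -> exists z, In z l /\ D A b z > 0.
Proof.
  intros H. apply NNPP. intros H'. apply H. intros y Hy.
  destruct (Rle_or_lt (D A b y) 0); auto. exfalso. apply H'. eauto.
Qed.

Lemma inv_lt1 t : 1 < t -> / t < 1.
Proof. intros. apply (Rmult_lt_reg_l t); [lra|]. rewrite Rinv_r by lra. lra. Qed.

Section Mid.
Variables (l : list pt) (A : pt).
Hypothesis HT : Tprop l.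
Hypothesis HS : Sprop l.
Hypothesis IA : In A l.

Lemma mid_before y a b : In y l -> In a l -> In b l -> Hh A y -> Hh A a -> Hh A b -> a <> b ->
  Rang l A y a -> Rang l A a b -> D a b y >= 0.
Proof.
  intros Iy Ia Ib Hy Ha Hb Nab Rya Rab.
  apply Rnot_lt_ge. intros Neg. rewrite (D4 A) in Neg.
  destruct Rya as [P1 | [Z1 [L1 N1]]].
  - destruct Rab as [P2 | [Z2 [L2 N2]]].
    + apply (HT A y b a); auto. split; [lra|split].
      * replace (D y b a) with (-(D A a b + D A b y + D A y a)) by (unfold D; ring). lra.
      * replace (D b A a) with (D A a b) by (unfold D; ring). lra.
    + destruct (G1 A a b Ha Hb Z2) as [t [Ht HC]].
      rewrite (Col_DAc A a b t y HC) in Neg. rewrite Z2 in Neg. rewrite (Dswap A a y) in Neg.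
      pose proof (nrm_pos A a Ha). pose proof (Col_nrm A a b t HC).
      destruct (classic (lastp l A a)) as [L|L].
      * specialize (L2 L). assert (t <= 1) by (apply (t_le1 t (nrm A a)); lra).
        assert (0 <= (1 - t) * D A y a) by (apply Rmult_le_pos; lra). lra.
      * specialize (N2 L). assert (1 <= t) by (apply (t_ge1 t (nrm A a)); lra).
        assert (t <> 1) by (intros ->; apply Nab; symmetry; apply (Col_1 A a b HC)).
        destruct (notlast l A a L) as [z [Iz Hz]].
        apply (HS A b z y a (/ t)); auto.
        -- split. apply Rinv_0_lt_compat; lra. apply inv_lt1; lra.
        -- apply (Col_inv A a b t); auto.
        -- rewrite (Col_DAc A a b t z HC). apply Rmult_lt_0_compat; lra.
        -- rewrite (Col_DAc A a b t y HC). rewrite (Dswap A a y).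
           assert (0 < t * D A y a) by (apply Rmult_lt_0_compat; lra). lra.
  - destruct (G1 A y a Hy Ha Z1) as [s [Hs HC]].
    rewrite Z1 in Neg.
    pose proof (Rang_ge l A a b Rab).
    assert (E : D A a b = s * D A y b) by apply (Col_DAc A y a s b HC).
    destruct (classic (lastp l A y)) as [L|L].
    + assert (La : lastp l A a) by (apply (last_col l A y a s Hs HC); auto).
      specialize (La b Ib).
      assert (D A a b = 0) by lra.
      assert (D A y b = 0).
      { rewrite H0 in E. destruct (Req_dec (D A y b) 0); auto. exfalso.
        assert (s * D A y b <> 0) by (apply Rmult_integral_contrapositive; split; lra). lra. }
      rewrite (Dswap A b y) in Neg. lra.
    + specialize (N1 L). pose proof (nrm_pos A y Hy). pose proof (Col_nrm A y a s HC).
      assert (1 <= s) by (apply (t_ge1 s (nrm A y)); lra).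
      rewrite (Dswap A b y) in Neg. rewrite E in Neg, H.
      assert (0 <= D A y b) by (destruct (Rle_or_lt 0 (D A y b)); auto;
                                 assert (0 < s * (- D A y b)) by (apply Rmult_lt_0_compat; lra); lra).
      assert (0 <= (s - 1) * D A y b) by (apply Rmult_le_pos; lra). lra.
Qed.

Lemma mid_after a b y : In y l -> In a l -> In b l -> Hh A y -> Hh A a -> Hh A b -> b <> y ->
  Rang l A a b -> Rang l A b y -> D a b y >= 0.
Proof.
  intros Iy Ia Ib Hy Ha Hb Nby Rab Rby.
  apply Rnot_lt_ge. intros Neg. rewrite (D4 A) in Neg.
  destruct Rab as [P1 | [Z1 [L1 N1]]].
  - destruct Rby as [P2 | [Z2 [L2 N2]]].
    + apply (HT A a y b); auto. split; [lra|split].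
      * replace (D a y b) with (-(D A a b + D A b y + D A y a)) by (unfold D; ring). lra.
      * replace (D y A b) with (D A b y) by (unfold D; ring). lra.
    + destruct (G1 A b y Hb Hy Z2) as [t [Ht HC]].
      rewrite Z2 in Neg. rewrite (Col_DAc A b y t a HC) in Neg. rewrite (Dswap A b a) in Neg.
      pose proof (nrm_pos A b Hb). pose proof (Col_nrm A b y t HC).
      destruct (classic (lastp l A b)) as [L|L].
      * specialize (L2 L). assert (t <= 1) by (apply (t_le1 t (nrm A b)); lra).
        assert (0 <= (1 - t) * D A a b) by (apply Rmult_le_pos; lra). lra.
      * specialize (N2 L). assert (1 <= t) by (apply (t_ge1 t (nrm A b)); lra).
        assert (t <> 1) by (intros ->; apply Nby; symmetry; apply (Col_1 A b y HC)).
        destruct (notlast l A b L) as [z [Iz Hz]].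
        apply (HS A y z a b (/ t)); auto.
        -- split. apply Rinv_0_lt_compat; lra. apply inv_lt1; lra.
        -- apply (Col_inv A b y t); auto.
        -- rewrite (Col_DAc A b y t z HC). apply Rmult_lt_0_compat; lra.
        -- rewrite (Col_DAc A b y t a HC). rewrite (Dswap A b a).
           assert (0 < t * D A a b) by (apply Rmult_lt_0_compat; lra). lra.
  - destruct (G1 A a b Ha Hb Z1) as [t [Ht HC]].
    rewrite Z1 in Neg.
    pose proof (Rang_ge l A b y Rby).
    assert (E : D A b y = t * D A a y) by apply (Col_DAc A a b t y HC).
    destruct (classic (lastp l A a)) as [L|L].
    + assert (Lb : lastp l A b) by (apply (last_col l A a b t Ht HC); auto).
      specialize (Lb y Iy).
      assert (D A b y = 0) by lra.
      assert (D A a y = 0).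
      { rewrite H0 in E. destruct (Req_dec (D A a y) 0); auto. exfalso.
        assert (t * D A a y <> 0) by (apply Rmult_integral_contrapositive; split; lra). lra. }
      rewrite (Dswap A y a) in Neg. lra.
    + specialize (N1 L). pose proof (nrm_pos A a Ha). pose proof (Col_nrm A a b t HC).
      assert (1 <= t) by (apply (t_ge1 t (nrm A a)); lra).
      rewrite (Dswap A y a) in Neg. rewrite E in Neg, H.
      assert (0 <= D A a y) by (destruct (Rle_or_lt 0 (D A a y)); auto;
                                 assert (0 < t * (- D A a y)) by (apply Rmult_lt_0_compat; lra); lra).
      assert (0 <= (t - 1) * D A a y) by (apply Rmult_le_pos; lra). lra.
Qed.
End Mid.

Definition lexle (a b : pt) := fst a < fst b \/ (fst a = fst b /\ snd a <= snd b).

Lemma D_A_first A b : D b A A = 0. Proof. unfold D; ring. Qed.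

Lemma D_cyc3 a b c : D a b c = D c a b. Proof. unfold D; ring. Qed.

Lemma label l : NoDup l -> length l = 5%nat -> Tprop l -> Sprop l -> Covered l.
Proof.
  intros ND Len HT HS.
  destruct (sort_ex pt lexle l) as [l1 [P1 SS1]].
  { intros x y _ _. unfold lexle. destruct (Rtotal_order (fst x) (fst y)) as [h|[h|h]].
    - left; left; auto.
    - destruct (Rle_dec (snd x) (snd y)); [left|right]; right; split; lra.
    - right; left; lra. }
  { intros x y z _ _ _. unfold lexle. intros; lra. }
  destruct l1 as [|A r]. { apply Permutation_length in P1. rewrite Len in P1. discriminate. }
  inversion SS1 as [|? ? SSr Fr]; subst.
  assert (ND1 : NoDup (A :: r)) by (apply (Permutation_NoDup P1); auto).
  assert (Hr : forall y, In y r -> Hh A y).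
  { intros y Hy. rewrite Forall_forall in Fr. specialize (Fr y Hy). unfold lexle, Hh in *.
    inversion ND1; subst. destruct Fr as [h|[h h']]. left; auto. right; split; auto.
    destruct h' as [h'|h']; auto. exfalso. apply H1.
    assert (E : A = y) by (destruct A, y; simpl in *; subst; auto). rewrite E. auto. }
  assert (IA : In A l) by (apply (Permutation_in _ (Permutation_sym P1)); left; auto).
  assert (Ir : forall y, In y r -> In y l) by (intros y Hy; apply (Permutation_in _ (Permutation_sym P1)); right; auto).
  destruct (sort_ex pt (Rang l A) r) as [r' [P2 SS2]].
  { intros x y Hx Hy. apply Rang_total; auto. }
  { intros x y z Hx Hy Hz. apply Rang_trans; auto. }
  assert (Lr' : length r' = 4%nat).
  { apply Permutation_length in P1. apply Permutation_length in P2. simpl in P1. lia. }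
  destruct r' as [|q1 [|q2 [|q3 [|q4 [|? ?]]]]]; simpl in Lr'; try lia.
  destruct (SS4 _ _ _ _ _ _ SS2) as [R12 [R13 [R14 [R23 [R24 R34]]]]].
  assert (P3 : Permutation l (A :: [q1; q2; q3; q4])) by (eapply perm_trans; [exact P1| apply perm_skip; exact P2]).
  assert (ND3 : NoDup [A; q1; q2; q3; q4]) by (apply (Permutation_NoDup P3); auto).
  assert (Hq : forall q, In q [q1; q2; q3; q4] -> Hh A q /\ In q l).
  { intros q Hq. apply (Permutation_in _ (Permutation_sym P2)) in Hq. auto. }
  destruct (Hq q1) as [H1 I1]; [simpl; auto|].
  destruct (Hq q2) as [H2 I2]; [simpl; auto|].
  destruct (Hq q3) as [H3 I3]; [simpl; auto|].
  destruct (Hq q4) as [H4 I4]; [simpl; auto|].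
  assert (Hl : forall y, In y l -> y = A \/ y = q1 \/ y = q2 \/ y = q3 \/ y = q4).
  { intros y Hy. apply (Permutation_in _ P3) in Hy. simpl in Hy. intuition. }
  apply NoDup_cons_iff in ND3. destruct ND3 as [NA ND3]. apply NoDup_cons_iff in ND3. destruct ND3 as [N1 ND3].
  apply NoDup_cons_iff in ND3. destruct ND3 as [N2 ND3]. apply NoDup_cons_iff in ND3. destruct ND3 as [N3 _].
  simpl in NA, N1, N2, N3.
  assert (A <> q1) by (intro; apply NA; auto).
  assert (q1 <> q2) by (intro; apply N1; auto).
  assert (q2 <> q3) by (intro; apply N2; auto).
  assert (q3 <> q4) by (intro; apply N3; auto).
  assert (q4 <> A) by (intro; apply NA; auto).
  assert (q2 <> q4) by (intro; apply N2; auto).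
  assert (q1 <> q3) by (intro; apply N1; auto).
  assert (q1 <> q4) by (intro; apply N1; auto).
  pose proof (Rang_ge _ _ _ _ R12). pose proof (Rang_ge _ _ _ _ R13). pose proof (Rang_ge _ _ _ _ R14).
  pose proof (Rang_ge _ _ _ _ R23). pose proof (Rang_ge _ _ _ _ R24). pose proof (Rang_ge _ _ _ _ R34).
  apply (cover_cyc l A q1 q2 q3 q4); auto; intros y Hy; destruct (Hl y Hy) as [->|[->|[->|[->| ->]]]];
    rewrite ?D_a, ?D_b; try lra.
  all: try (rewrite D_cyc3; lra).
  all: try (rewrite D_cyc3, D_cyc3; lra).
  all: first [ solve [apply (mid_after l A HT HS IA); auto] | solve [apply (mid_before l A HT HS IA); auto] ].
Qed.

Theorem mainTheorem3 (p : nat -> pt) :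
  (forall i j, (i < 5)%nat -> (j < 5)%nat -> i <> j -> p i <> p j) ->
  in_convex_position 5 p ->
  csc_position 5 p.
Proof.
  intros Hd Hc. apply cov_csc. apply label.
  - unfold l5. repeat constructor; simpl; intros H; decompose [or] H; try contradiction;
    match goal with E : p ?i = p ?j |- _ => apply (Hd i j); [lia|lia|lia|exact E] end.
  - reflexivity.
  - intros a b c x Ia Ib Ic Ix [H1 [H2 H3]].
    apply In_l5 in Ia, Ib, Ic, Ix.
    destruct Ia as [i [Hi ->]]; destruct Ib as [j [Hj ->]]; destruct Ic as [k [Hk ->]]; destruct Ix as [m [Hm ->]].
    destruct (Hc m Hm) as [_ NI]. apply NI. apply (inside_interior p i j k); auto.
  - intros a b c d x t Ia Ib Ic Id Ix Ht Ex H1 H2.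
    apply In_l5 in Ia, Ib, Ic, Id, Ix.
    destruct Ia as [i [Hi ->]]; destruct Ib as [j [Hj ->]]; destruct Ic as [k [Hk ->]];
    destruct Id as [k' [Hk' ->]]; destruct Ix as [m [Hm Em]].
    destruct (Hc m Hm) as [_ NI]. apply NI. rewrite <- Em.
    apply (seg_interior p i j k k' x t); auto.
Qed.
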